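(* Every tree admits a canonical dominating set.
   Context: A set $D\subseteq V(G)$ is a dominating set if every vertex of $G$ is in $D$ or adjacent to a vertex of $D$. Two dominating sets $D,D'$ are adjacent if $|D\triangle D'|=1$. For dominating sets $D_p,D_q$ and an integer $k>0$, write $D_p\leftrightarrow_k D_q$ if there is a sequence $D_0=D_p,\dots,D_\ell=D_q$ ($\ell\ge0$) of dominating sets of $G$ with consecutive sets adjacent and $|D_i|\le k$ for all $i$. A minimum dominating set $D^*$ of $G$ is canonical if $D\leftrightarrow_{|D|+1} D^*$ for every dominating set $D$ of $G$. *)

(* Defs.v *)
From mathcomp Require Import all_boot.
Set Implicit Arguments. Unset Strict Implicit. Unset Printing Implicit Defensive.

Section Dom.
Variables (T : finType) (e : rel T).

Definition simple_graph : Prop := symmetric e /\ irreflexive e.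

Definition connected_graph : Prop := forall x y : T, connect e x y.

Definition acyclic_graph : Prop :=
  forall c : seq T, uniq c -> 2 < size c -> ~~ cycle e c.

Definition is_tree : Prop := simple_graph /\ connected_graph /\ acyclic_graph.

Definition dominating (D : {set T}) : bool :=
  [forall v, (v \in D) || [exists u in D, e u v]].

Definition dom_adj (D D' : {set T}) : bool :=
  #|(D :\: D') :|: (D' :\: D)| == 1.

Definition reconf (k : nat) (Dp Dq : {set T}) : Prop :=
  exists s : seq {set T},
    [/\ path dom_adj Dp s, last Dp s = Dq &
        all (fun D => dominating D && (#|D| <= k)) (Dp :: s)].

Definition minimum_dominating (D : {set T}) : Prop :=
  dominating D /\ forall D' : {set T}, dominating D' -> #|D| <= #|D'|.

Definition canonical_dominating (Ds : {set T}) : Prop :=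
  minimum_dominating Ds /\
  forall D : {set T}, dominating D -> reconf #|D|.+1 D Ds.

End Dom.

(* Main.v *)
Require Import Defs.
From mathcomp Require Import all_boot zify.
Set Implicit Arguments. Unset Strict Implicit. Unset Printing Implicit Defensive.

Definition nbS {T : finType} (e : rel T) (S : {set T}) (x : T) : {set T} :=
  [set y in S | e x y].

Lemma pick_nb {T : finType} (e : rel T) (S : {set T}) x h :
  2 <= #|nbS e S x| -> exists y, [/\ y \in S, e x y & y != h].
Proof.
move=> deg; case: (boolP [exists y, [&& y \in S, e x y & y != h]]).
  by move=> /existsP[y /and3P[? ? ?]]; exists y.
rewrite negb_exists => /forallP H.
have : nbS e S x \subset [set h].
  apply/subsetP=> z; rewrite /nbS !inE => /andP[zS ezx].
  by move: (H z); rewrite zS ezx /= negbK.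
move=> /subset_leq_card; rewrite cards1 => Hle.
by move: deg; rewrite leqNgt ltnS Hle.
Qed.

Lemma last_take_nth {T : Type} (x : T) (p : seq T) i :
  i < size p -> last x (take i.+1 p) = nth x p i.
Proof.
elim: p x i => [|a p IH] x [|i] //= ip.
  by rewrite take0.
by rewrite IH //; apply: set_nth_default.
Qed.

Lemma ext_notin {T : finType} (e : rel T) :
  symmetric e -> irreflexive e -> acyclic_graph e ->
  forall x p y, uniq (x :: p) -> path e x p -> e x y -> y != head x p ->
  y \notin x :: p.
Proof.
move=> sym irr acy x p y u pth exy yh; apply/negP => yin.
have yx : y != x by apply/eqP=> yx; rewrite yx irr in exy.
move: yin; rewrite in_cons (negPf yx) /= => yp.
have i0 : 0 < index y p.
  by case: p yh yp {u pth} => //= h p' yh; rewrite eq_sym (negPf yh).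
have ip : index y p < size p by rewrite index_mem.
apply: (negP (acy (take (index y p).+2 (x :: p)) (take_uniq _ u) _)).
  rewrite size_take /=; case: ifP => _; first by rewrite !ltnS.
  by rewrite ltnS (leq_ltn_trans i0 ip).
by rewrite /= rcons_path (take_path _ pth) /= last_take_nth // nth_index // sym exy.
Qed.

Lemma mindeg2_false {T : finType} (e : rel T) (S : {set T}) :
  symmetric e -> irreflexive e -> acyclic_graph e ->
  forall x0, x0 \in S ->
  (forall x, x \in S -> 2 <= #|nbS e S x|) -> False.
Proof.
move=> sym irr acy x0 Sx0 deg.
suff H : forall n x p, #|T| - size p <= n -> uniq (x :: p) ->
   all (mem S) (x :: p) -> path e x p -> False.
  by apply: (H #|T| x0 [::]) => //=; rewrite ?Sx0 ?subn0.
elim=> [|n IH] x p hn u aS pth;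
  have [y [yS exy yh]] := pick_nb (head x p) (deg x (allP aS x (mem_head _ _)));
  have ynin := ext_notin sym irr acy u pth exy yh.
- have : uniq (y :: x :: p) by rewrite /= ynin.
  move=> /card_uniqP H; have := max_card (mem (y :: x :: p)); rewrite H /=.
  by move: hn; rewrite leqn0 subn_eq0 /=; lia.
- apply: (IH y (x :: p)) => //=.
  + by move: hn; rewrite subnS; case: (#|T| - size p) => //=.
  + by apply/andP; split; [exact: ynin | exact: u].
  + by apply/andP; split; [exact: yS | exact: aS].
  + by rewrite (sym y x) exy.
Qed.


Definition Ed {T : finType} (e : rel T) (S : {set T}) : {set T * T} :=
  [set p : T * T | [&& p.1 \in S, p.2 \in S & e p.1 p.2]].

Lemma forest_edges {T : finType} (e : rel T) :
  symmetric e -> irreflexive e -> acyclic_graph e ->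
  forall S : {set T}, S != set0 -> #|Ed e S| + 2 <= 2 * #|S|.
Proof.
move=> sym irr acy S.
elim: #|S| {-2}S (leqnn #|S|) => [|n IH] {}S hS /set0Pn [x0 Sx0].
  by move: hS; rewrite leqn0 => /eqP/cards0_eq Se; rewrite Se inE in Sx0.
have [v [vS dv]] : exists v, v \in S /\ #|nbS e S v| <= 1.
  case: (boolP [exists v in S, #|nbS e S v| <= 1]).
    by move=> /existsP[v /andP[? ?]]; exists v.
  rewrite negb_exists => /forallP H; exfalso.
  apply: (mindeg2_false sym irr acy Sx0) => x xS.
  by move: (H x); rewrite xS /= -ltnNge.
have cS : #|S| = #|S :\ v| + 1 by rewrite (cardsD1 v S) vS addnC.
have sub : Ed e S \subset
   Ed e (S :\ v) :|: ([set (v, y) | y in nbS e S v] :|: [set (y, v) | y in nbS e S v]).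
  apply/subsetP=> [[a b]]; rewrite !inE /= => /and3P[aS bS eab].
  case: (eqVneq a v) => [av|av].
    subst a; apply/orP; right; apply/orP; left; apply/imsetP; exists b => //.
    by rewrite !inE bS eab.
  case: (eqVneq b v) => [bv|bv].
    subst b; apply/orP; right; apply/orP; right; apply/imsetP; exists a => //.
    by rewrite !inE aS sym eab.
  by rewrite aS bS eab.
have c1 := subset_leq_card sub.
have c2 := leq_imset_card (fun y => (v, y)) (nbS e S v).
have c3 := leq_imset_card (fun y => (y, v)) (nbS e S v).
have c4 := leq_card_setU (Ed e (S :\ v)) ([set (v, y) | y in nbS e S v] :|: [set (y, v) | y in nbS e S v]).
have c5 := leq_card_setU [set (v, y) | y in nbS e S v] [set (y, v) | y in nbS e S v].
case: (eqVneq (S :\ v) set0) => [S0|S0].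
  have E0 : Ed e S = set0.
    apply/setP=> [[a b]]; rewrite !inE /=.
    apply/negP=> /and3P[aS bS eab].
    have av : a = v.
      apply/eqP; apply: contraT => av.
      have : a \in S :\ v by rewrite !inE av aS.
      by rewrite S0 inE.
    have bv : b = v.
      apply/eqP; apply: contraT => bv.
      have : b \in S :\ v by rewrite !inE bv bS.
      by rewrite S0 inE.
    by rewrite av bv irr in eab.
  by rewrite E0 cards0 cS S0 cards0.
have := IH (S :\ v) _ S0.
have hS2 : #|S :\ v| <= n by move: hS; rewrite cS addn1 ltnS.
move=> /(_ hS2) ih.
have c4' := c4.1; have c5' := c5.1.
have key : #|Ed e S| <= #|Ed e (S :\ v)| + 2.
  exact: (leq_trans (leq_trans c1 c4') (leq_add (leqnn _) (leq_trans c5' (leq_add (leq_trans c2 dv) (leq_trans c3 dv))))).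
move: key ih cS; clear; lia.
Qed.


Definition cl {T : finType} (e : rel T) (c x : T) := (c == x) || e c x.

Lemma dom_cl {T : finType} (e : rel T) (D : {set T}) :
  dominating e D -> forall v, exists2 c, c \in D & cl e c v.
Proof.
move=> /forallP H v; case/orP: (H v) => [vD|/existsP[c /andP[cD ecv]]].
  by exists v; rewrite // /cl eqxx.
by exists c; rewrite // /cl ecv orbT.
Qed.

Lemma cl_dom {T : finType} (e : rel T) (D : {set T}) :
  (forall v, exists2 c, c \in D & cl e c v) -> dominating e D.
Proof.
move=> H; apply/forallP=> v; have [c cD /orP[/eqP<-|ecv]] := H v.
  by rewrite cD.
by apply/orP; right; apply/existsP; exists c; rewrite cD ecv.
Qed.

Lemma dom_sup {T : finType} (e : rel T) (D D' : {set T}) :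
  dominating e D -> D \subset D' -> dominating e D'.
Proof.
move=> dD sub; apply: cl_dom => v; have [c cD ccv] := dom_cl dD v.
by exists c => //; apply: (subsetP sub).
Qed.

Definition pn {T : finType} (e : rel T) (C : {set T}) (w : T) : {set T} :=
  [set x | cl e w x && [forall c in C, cl e c x ==> (c == w)]].

Lemma pn_nonempty {T : finType} (e : rel T) (C : {set T}) w :
  w \in C -> dominating e C -> ~~ dominating e (C :\ w) -> exists x, x \in pn e C w.
Proof.
move=> wC dC ndC.
have [v nv] : exists v, ~~ ((v \in C :\ w) || [exists u in C :\ w, e u v]).
  move: ndC; rewrite /dominating negb_forall => /existsP[v nv]; by exists v.
move: nv; rewrite negb_or => /andP[nvC /existsPn nex].
exists v; rewrite inE; apply/andP; split.
  have [c cC /orP[/eqP cv|ecv]] := dom_cl dC v.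
    subst c; move: nvC; rewrite !inE cC andbT negbK => /eqP->; by rewrite /cl eqxx.
  case: (eqVneq c w) => [cw|cw]; first by rewrite /cl -cw ecv orbT.
  by move: (nex c); rewrite !inE cw cC ecv.
apply/forallP=> c; apply/implyP=> cC; apply/implyP=> /orP[/eqP cv|ecv].
  by subst c; move: nvC; rewrite !inE cC andbT negbK.
apply: contraT => cw; by move: (nex c); rewrite !inE cw cC ecv.
Qed.

Lemma pn_cl {T : finType} (e : rel T) (C : {set T}) w x : x \in pn e C w -> cl e w x.
Proof. by rewrite inE => /andP[]. Qed.

Lemma pn_priv {T : finType} (e : rel T) (C : {set T}) w x c :
  x \in pn e C w -> c \in C -> cl e c x -> c = w.
Proof.
rewrite inE => /andP[_ /forallP H] cC ccx.
by move: (H c); rewrite cC ccx /= => /eqP.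
Qed.

Lemma exch_ok {T : finType} (e : rel T) (C : {set T}) w u :
  u \notin C -> u != w -> dominating e C ->
  (forall x, x \in pn e C w -> cl e u x) -> dominating e ((u |: C) :\ w).
Proof.
move=> uC uw dC H; apply: cl_dom => v.
case: (boolP (v \in pn e C w)) => [vp|vp].
  by exists u; [rewrite !inE uw eqxx | exact: H].
have [c cC ccv] := dom_cl dC v.
case: (eqVneq c w) => [cw|cw]; last by exists c; rewrite // !inE cw cC orbT.
subst c.
move: vp; rewrite inE ccv /= negb_forall => /existsP[c].
rewrite !negb_imply => /andP[cC' /andP[ccv' cw]].
by exists c; rewrite // !inE cw cC' orbT.
Qed.

Lemma pn_dom {T : finType} (e : rel T) (C Ds : {set T}) w x :
  x \in pn e C w -> w \notin Ds -> dominating e Ds ->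
  exists2 d, d \in Ds :\: C & cl e d x.
Proof.
move=> xp wD dD; have [d dDs cdx] := dom_cl dD x.
exists d => //; rewrite inE dDs andbT; apply/negP => dC.
by move: wD; rewrite -(pn_priv xp dC cdx) dDs.
Qed.

Lemma card_pairs {T : finType} (P : pred T) (Q : rel T) :
  #|[set p : T * T | P p.1 && Q p.1 p.2]| = \sum_(x | P x) #|[set y | Q x y]|.
Proof.
rewrite -sum1_card.
rewrite (eq_bigl (fun p : T * T => P p.1 && Q p.1 p.2)); last by move=> p; rewrite inE.
rewrite -(pair_big_dep P Q (fun _ _ => 1)) /=.
apply: eq_bigr => x _; rewrite -sum1_card; apply: eq_bigl => y; by rewrite inE.
Qed.

Lemma card_disjU {T : finType} (X Y : {set T}) :
  (forall p, p \in X -> p \in Y -> False) -> #|X :|: Y| = #|X| + #|Y|.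
Proof.
move=> H; rewrite cardsU.
have -> : X :&: Y = set0.
  by apply/setP => p; rewrite !inE; apply/negP => /andP[a b]; exact: (H p a b).
by rewrite cards0 subn0.
Qed.


Lemma exchange {T : finType} (e : rel T) :
  symmetric e -> irreflexive e -> acyclic_graph e ->
  forall C Ds : {set T}, dominating e C ->
  (forall v, v \in C -> ~~ dominating e (C :\ v)) ->
  dominating e Ds -> #|Ds| <= #|C| -> C != Ds ->
  exists u w, [/\ u \in Ds :\: C, w \in C :\: Ds & dominating e ((u |: C) :\ w)].
Proof.
move=> sym irr acy C Ds dC minC dDs cardD neq.
case: (boolP [exists u, exists w, [&& u \in Ds :\: C, w \in C :\: Ds &
                                     dominating e ((u |: C) :\ w)]]).
  by move=> /existsP[u /existsP[w /and3P[? ? ?]]]; exists u, w.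
move=> /existsPn H0; exfalso.
have H : forall u w, u \in Ds :\: C -> w \in C :\: Ds ->
    ~~ dominating e ((u |: C) :\ w).
  by move=> u w uB wA; move: (H0 u) => /existsPn /(_ w); rewrite uB wA.
set A := C :\: Ds; set B := Ds :\: C.
have AC : forall x, x \in A -> x \in C by move=> x; rewrite inE => /andP[].
have AnD : forall x, x \in A -> x \notin Ds by move=> x; rewrite inE => /andP[].
have BD : forall x, x \in B -> x \in Ds by move=> x; rewrite inE => /andP[].
have BnC : forall x, x \in B -> x \notin C by move=> x; rewrite inE => /andP[].
have BnA : forall x, x \in B -> x \notin A.
  by move=> x xB; apply/negP => /AC xC; move: (BnC x xB); rewrite xC.
have nocover : forall w, w \in A -> forall u, u \in B ->
    ~ (forall x, x \in pn e C w -> cl e u x).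
  move=> w wA u uB cov; apply: (negP (H u w uB wA)); apply: exch_ok => //.
    exact: BnC.
  by apply/eqP => uw; move: (BnA u uB); rewrite uw wA.
set P0 := [set x | [exists w in A, x \in pn e C w] && (x \notin A :|: B)].
have P0nA : forall x, x \in P0 -> x \notin A.
  by move=> x; rewrite !inE negb_or => /andP[_ /andP[]].
have P0nB : forall x, x \in P0 -> x \notin B.
  by move=> x; rewrite !inE negb_or => /andP[_ /andP[]].
have BnP : forall x, x \in B -> x \notin P0.
  by move=> x xB; apply/negP => /P0nB; rewrite xB.
set Z := fun w => [set z | e w z && ((z \in P0) && (z \in pn e C w) ||
                        (z \in B) && ((z \in pn e C w) || (w \in pn e C w)))].
have wpn : forall w, w \in A -> exists x, x \in pn e C w.
  by move=> w wA; apply: pn_nonempty => //; [exact: AC | apply: minC; exact: AC].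
have F1 : forall w, w \in A -> 2 <= #|Z w|.
  move=> w wA.
  have sub1 : forall x, x \in pn e C w -> x != w -> x \in Z w.
    move=> x xp xw.
    have ewx : e w x by move: (pn_cl xp); rewrite /cl eq_sym (negPf xw).
    have xC : x \notin C.
      by apply/negP => xC; move: xw; rewrite (pn_priv xp xC) ?eqxx // /cl eqxx.
    rewrite inE ewx /=; case: (boolP (x \in B)) => xB; first by rewrite xp orbT.
    apply/orP; left; rewrite xp andbT [x \in P0]inE in_setU negb_or xB andbT.
    have xA : x \notin A by apply/negP => /AC; rewrite (negPf xC).
    by rewrite xA andbT; apply/existsP; exists w; rewrite wA xp.
  have sub2 : w \in pn e C w -> forall b, b \in B -> e w b -> b \in Z w.
    by move=> wp b bB ewb; rewrite inE ewb bB wp !orbT.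
  apply: contraT; rewrite -ltnNge ltnS => /card_le1_eqP Zeq.
  case: (boolP (w \in pn e C w)) => wp.
    have [d dB cdw] := pn_dom wp (AnD w wA) dDs.
    have dw : d != w by apply/eqP => dw; move: (BnA d dB); rewrite dw wA.
    have edw : e d w by move: cdw; rewrite /cl (negPf dw).
    case: (nocover w wA d dB) => x xp.
    case: (eqVneq x w) => [->|xw]; first by [].
    have dZ : d \in Z w by apply: sub2; rewrite // sym.
    by rewrite (Zeq x d (sub1 x xp xw) dZ) /cl eqxx.
  have [x xp] := wpn w wA.
  have [d dB cdx] := pn_dom xp (AnD w wA) dDs.
  case: (nocover w wA d dB) => y yp.
  have yw : y != w by apply/eqP => yw; move: wp; rewrite -{1}yw yp.
  have xw : x != w by apply/eqP => xw; move: wp; rewrite -{1}xw xp.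
  by rewrite (Zeq x y (sub1 x xp xw) (sub1 y yp yw)).
have F2 : forall x, x \in P0 -> 0 < #|[set b | (b \in B) && e x b]|.
  move=> x xP; have := xP; rewrite inE => /andP[/existsP[w /andP[wA xp]] _].
  have [d dB cdx] := pn_dom xp (AnD w wA) dDs.
  have dx : d != x by apply/eqP => dx; move: (P0nB x xP); rewrite -dx dB.
  have edx : e d x by move: cdx; rewrite /cl (negPf dx).
  by apply/card_gt0P; exists d; rewrite inE dB sym.
set R := [set p : T * T | (p.1 \in A) && (p.2 \in Z p.1)].
set O2 := [set p : T * T | (p.1 \in P0) && ((p.2 \in B) && e p.1 p.2)].
have F3 : 2 * #|A| <= #|R|.
  have -> : #|R| = \sum_(x | x \in A) #|[set y | y \in Z x]|
    := card_pairs (fun x => x \in A) (fun x y => y \in Z x).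
  rewrite mulnC -sum_nat_const; apply: leq_sum => w wA.
  have -> : [set y | y \in Z w] = Z w by apply/setP => y; rewrite inE.
  exact: F1.
have F4 : #|P0| <= #|O2|.
  have -> : #|O2| = \sum_(x | x \in P0) #|[set y | (y \in B) && e x y]|
    := card_pairs (fun x => x \in P0) (fun x y => (y \in B) && e x y).
  rewrite -sum1_card; apply: leq_sum => x xP; exact: F2.
set S := A :|: B :|: P0.
pose rk x := if x \in A then 0 else if x \in P0 then 1 else 2.
set U := R :|: O2.
have memU : forall p, p \in U -> (rk p.1 < rk p.2) && e p.1 p.2.
  move=> [a b]; rewrite in_setU [(a, b) \in R]inE [(a, b) \in O2]inE /=.
  move=> /orP[/andP[aA bZ]|/andP[aP /andP[bB eab]]].
    move: bZ; rewrite [b \in Z a]inE => /andP[eab /orP[/andP[bP _]|/andP[bB _]]].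
      by rewrite /rk aA (negPf (P0nA b bP)) bP eab.
    by rewrite /rk aA (negPf (BnA b bB)) (negPf (BnP b bB)) eab.
  by rewrite /rk (negPf (P0nA a aP)) aP (negPf (BnA b bB)) (negPf (BnP b bB)) eab.
have UinS : forall p, p \in U -> (p.1 \in S) && (p.2 \in S).
  move=> [a b]; rewrite in_setU [(a, b) \in R]inE [(a, b) \in O2]inE /=.
  move=> /orP[/andP[aA bZ]|/andP[aP /andP[bB eab]]].
    move: bZ; rewrite [b \in Z a]inE => /andP[eab /orP[/andP[bP _]|/andP[bB _]]].
      by rewrite [a \in S]inE [b \in S]inE !in_setU aA bP !orbT.
    by rewrite [a \in S]inE [b \in S]inE !in_setU aA bB !orbT.
  by rewrite [a \in S]inE [b \in S]inE !in_setU aP bB !orbT.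
pose sw := fun p : T * T => (p.2, p.1).
have swinj : injective sw by move=> [a b] [c d] /= [-> ->].
set V := sw @: U.
have cU : #|U| = #|R| + #|O2|.
  apply: card_disjU => [[a b]]; rewrite [(a, b) \in R]inE [(a, b) \in O2]inE /=.
  move=> /andP[aA _] /andP[aP _].
  by move: (P0nA a aP); rewrite aA.
have cV : #|V| = #|U| by rewrite card_imset.
have cUV : #|U :|: V| = #|U| + #|V|.
  apply: card_disjU => p pU /imsetP[q qU pq].
  have := memU p pU; have := memU q qU; rewrite pq /= => /andP[lt1 _] /andP[lt2 _].
  by move: (ltn_trans lt1 lt2); rewrite ltnn.
have subE : U :|: V \subset Ed e S.
  apply/subsetP => p; rewrite in_setU => /orP[pU|/imsetP[q qU ->]].
    by rewrite inE; have := UinS p pU; have := memU p pU => /andP[_ ->] /andP[-> ->].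
  rewrite inE /=; have := UinS q qU; have := memU q qU.
  by move=> /andP[_ eq] /andP[-> ->]; rewrite sym.
have cS : #|S| <= #|A| + #|B| + #|P0|.
  apply: (leq_trans (leq_card_setU _ _).1); rewrite leq_add2r.
  exact: (leq_card_setU _ _).1.
have cB : #|B| <= #|A|.
  rewrite /A /B !cardsD setIC; lia.
have [w0 w0A] : exists w, w \in A.
  apply/set0Pn; apply: contra neq => /eqP A0.
  rewrite eqEcard cardD andbT; apply/subsetP => x xC; apply: contraT => xD.
  have : x \in A by rewrite inE xD xC.
  by rewrite A0 inE.
have Sne : S != set0 by apply/set0Pn; exists w0; rewrite /S !in_setU w0A.
have fe := forest_edges sym irr acy Sne.
have cE : #|U :|: V| <= #|Ed e S| := subset_leq_card subE.
move: fe cE cUV cV cU F3 F4 cS cB; clear; lia.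
Qed.


Lemma dom_adj_del {T : finType} (A : {set T}) v : v \in A -> dom_adj A (A :\ v).
Proof.
move=> vA; rewrite /dom_adj.
have -> : (A :\: (A :\ v)) :|: ((A :\ v) :\: A) = [set v].
  apply/setP => x; rewrite !inE.
  by case: (eqVneq x v) => [->|]; rewrite ?vA //=; case: (x \in A).
by rewrite cards1.
Qed.

Lemma dom_adj_add {T : finType} (A : {set T}) v : v \notin A -> dom_adj A (v |: A).
Proof.
move=> vA; rewrite /dom_adj.
have -> : (A :\: (v |: A)) :|: ((v |: A) :\: A) = [set v].
  apply/setP => x; rewrite !inE.
  by case: (eqVneq x v) => [->|]; rewrite ?(negPf vA) //=; case: (x \in A).
by rewrite cards1.
Qed.

Lemma reconf_step {T : finType} (e : rel T) k (D D1 Dq : {set T}) :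
  dom_adj D D1 -> dominating e D -> #|D| <= k -> reconf e k D1 Dq -> reconf e k D Dq.
Proof.
move=> adj dD ck [s [p l a]]; exists (D1 :: s); split => //=.
  by rewrite adj.
by rewrite dD ck.
Qed.

Lemma reach {T : finType} (e : rel T) :
  symmetric e -> irreflexive e -> acyclic_graph e ->
  forall Ds, minimum_dominating e Ds ->
  forall k (C : {set T}), dominating e C -> #|C| <= k -> reconf e k.+1 C Ds.
Proof.
move=> sym irr acy Ds [dDs minDs] k C.
move: {2}(#|C| + #|C :\: Ds|) (leqnn (#|C| + #|C :\: Ds|)) => n.
elim: n C => [|n IH] C hn dC ck.
  have C0 : C = set0 by apply/cards0_eq; move: hn; lia.
  have Ds0 : Ds = set0 by apply/cards0_eq; move: (minDs C dC); rewrite C0 cards0; lia.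
  by exists [::]; split => //=; rewrite ?C0 ?Ds0 // -C0 dC /= andbT (leq_trans ck).
case: (eqVneq C Ds) => [CD|neq].
  by exists [::]; rewrite -CD; split => //=; rewrite dC /= andbT (leq_trans ck).
case: (boolP [exists v in C, dominating e (C :\ v)]).
  move=> /existsP[v /andP[vC dv]].
  have cv : #|C| = #|C :\ v| + 1 by rewrite (cardsD1 v C) vC addnC.
  apply: (reconf_step (D1 := C :\ v)) => //; first exact: dom_adj_del.
    exact: leqW.
  apply: IH => //; last by move: ck; rewrite cv; lia.
  have : #|(C :\ v) :\: Ds| <= #|C :\: Ds|.
    by apply: subset_leq_card; apply: setSD; apply: subsetDl.
  by move: hn cv; lia.
move=> /existsPn nd.
have minC : forall v, v \in C -> ~~ dominating e (C :\ v).
  by move=> v vC; move: (nd v); rewrite vC.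
have [u [w [uB wA dC']]] := exchange sym irr acy dC minC dDs (minDs C dC) neq.
have uC : u \notin C by move: uB; rewrite inE => /andP[].
have uD : u \in Ds by move: uB; rewrite inE => /andP[].
have wC : w \in C by move: wA; rewrite inE => /andP[].
have wuC : w \in u |: C by rewrite inE wC orbT.
have c1 : #|u |: C| = #|C| + 1 by rewrite cardsU1 uC addnC.
have c2 : #|u |: C| = #|(u |: C) :\ w| + 1 by rewrite (cardsD1 w (u |: C)) wuC addnC.
apply: (reconf_step (D1 := u |: C)) => //; first exact: dom_adj_add.
  exact: leqW.
apply: (reconf_step (D1 := (u |: C) :\ w)) => //.
- exact: dom_adj_del.
- by apply: (dom_sup dC); apply: subsetUr.
- by rewrite c1 addn1 ltnS.
apply: IH => //; last by move: ck c1 c2; lia.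
have : #|((u |: C) :\ w) :\: Ds| < #|C :\: Ds|.
  apply: proper_card; rewrite properE; apply/andP; split.
    apply/subsetP => x; rewrite !inE => /andP[xD /andP[xw /orP[/eqP xu|xC]]].
      by move: xD; rewrite xu uD.
    by rewrite xD xC.
  apply/subsetPn; exists w; first exact: wA.
  by rewrite !inE eqxx /= andbF.
by move: hn c1 c2; lia.
Qed.

Theorem lemma7 (T : finType) (e : rel T) :
  is_tree e -> exists Ds : {set T}, canonical_dominating e Ds.
Proof.
move=> [[sym irr] [_ acy]].
have dT : dominating e setT by apply: cl_dom => v; exists v; rewrite ?inE // /cl eqxx.
case: (arg_minnP (fun D : {set T} => #|D|) dT) => Ds dDs minDs.
have mDs : minimum_dominating e Ds by split.
exists Ds; split => // D dD.
exact: reach.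
Qed.
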